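(* Let $G=(V,E)$ be a twinless strongly connected directed graph, and let $G^{1}=(V,E^{1})$ with $E^{1}\subseteq E$ be a strongly connected spanning subgraph of $G$ that is not twinless strongly connected. Let $(v,w)\in E\setminus E^{1}$ be an edge such that $v$ and $w$ lie in different twinless strongly connected components of $G^{1}$. If $G^{1}$ has $k$ twinless strongly connected components, then the graph $(V,E^{1}\cup\{(v,w)\})$ has fewer than $k$ twinless strongly connected components.
   Context: Directed graphs are finite. Vertices $a,b$ of a directed graph are twinless strongly connected if there exist a directed path $p$ from $a$ to $b$ and a directed path $q$ from $b$ to $a$ such that for every edge $(x,y)$ of $p$, the reverse edge $(y,x)$ does not belong to $q$. This is an equivalence relation on the vertices; its equivalence classes are the twinless strongly connected components. A directed graph is twinless strongly connected if it has exactly one twinless strongly connected component (equivalently, it has a strongly connected spanning subgraph containing no pair of antiparallel edges $(x,y),(y,x)$). *)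

(* Defs.v *)
From mathcomp Require Import all_boot.
From mathcomp Require Import boolp.
Set Implicit Arguments. Unset Strict Implicit. Unset Printing Implicit Defensive.

Section Digraph.
Variable V : finType.

Definition erel (E : {set V * V}) : rel V := fun x y => (x, y) \in E.

Definition dpath (E : {set V * V}) (a : V) (s : seq V) : bool := path (erel E) a s.

Definition pedges (a : V) (s : seq V) : seq (V * V) := zip (a :: s) s.

Definition tsc (E : {set V * V}) (a b : V) : Prop :=
  exists p q : seq V,
    [/\ dpath E a p, last a p = b, dpath E b q, last b q = a &
        forall x y : V, (x, y) \in pedges a p -> (y, x) \notin pedges b q].

Definition tscc (E : {set V * V}) (a : V) : {set V} := [set b | `[< tsc E a b >]].

Definition n_tscc (E : {set V * V}) : nat := #|[set tscc E a | a : V]|.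

Definition strongly_connected (E : {set V * V}) : Prop :=
  forall a b : V, connect (erel E) a b.

Definition twinless_strongly_connected (E : {set V * V}) : Prop := n_tscc E = 1.

End Digraph.

(* Main.v *)
From mathcomp Require Import zify.
Require Import Defs.
From mathcomp Require Import all_boot.
From mathcomp Require Import boolp.
Set Implicit Arguments. Unset Strict Implicit. Unset Printing Implicit Defensive.

Section S.
Variable V : finType.
Implicit Types (H F : {set V * V}) (S X : {set V}) (a b c x y u v : V) (s : seq V).

Lemma pedges_cons (x y : V) s : pedges x (y :: s) = (x, y) :: pedges y s.
Proof. by []. Qed.

Lemma pedges_in (e : rel V) x s : path e x s -> forall u v, (u,v) \in pedges x s -> e u v.
Proof.
elim: s x => [|y s IH] x //= /andP[exy ps] u v; rewrite in_cons => /orP[/eqP[-> ->]//|].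
exact: IH.
Qed.

Lemma path_pedges (A : {set V * V}) x s :
  (forall u v, (u,v) \in pedges x s -> (u,v) \in A) -> dpath A x s.
Proof.
elim: s x => [|y s IH] x //= h; apply/andP; split.
  by apply: h; rewrite pedges_cons mem_head.
by apply: IH => u v huv; apply: h; rewrite pedges_cons in_cons huv orbT.
Qed.

Lemma pedges_mem x s u v : (u,v) \in pedges x s -> u \in x :: s /\ v \in x :: s.
Proof.
elim: s x => [|y s IH] x //; rewrite pedges_cons in_cons => /orP[/eqP[-> ->]|].
  by rewrite !in_cons !eqxx orbT.
by move/IH => [h1 h2]; split; rewrite in_cons ?h1 ?h2 orbT.
Qed.

Lemma uniq_twin x s u v : uniq (x :: s) -> (u,v) \in pedges x s -> (v,u) \in pedges x s -> False.
Proof.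
elim: s x => [|y s IH] x //; rewrite !pedges_cons !in_cons => /andP[xn us].
case/orP=> [/eqP[-> ->]|h1]; case/orP=> [/eqP[e1 e2]|h2].
- by move: xn; rewrite in_cons e1 e2 eqxx.
- by have [_ ] := pedges_mem h2; apply/negP.
- by have [_ ] := pedges_mem h1; rewrite e1; apply/negP.
- exact: IH us h1 h2.
Qed.

Lemma crossing (e : rel V) X x s : path e x s -> x \in X -> last x s \notin X ->
  exists u v, [/\ (u,v) \in pedges x s, u \in X & v \notin X].
Proof.
elim: s x => [|y s IH] x /=; first by move=> _ ->.
move=> /andP[_ ps] xX lX; case: (boolP (y \in X)) => yX.
  have [u [v [h1 h2 h3]]] := IH y ps yX lX.
  by exists u, v; rewrite pedges_cons in_cons h1 orbT.
by exists x, y; rewrite pedges_cons mem_head.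
Qed.

Lemma connect_last (e : rel V) x s : path e x s -> forall u, u \in x :: s -> connect e u (last x s).
Proof.
elim: s x => [|y s IH] x /=; first by move=> _ u; rewrite inE => /eqP->.
move=> /andP[exy ps] u; rewrite in_cons => /orP[/eqP->|hu]; last exact: IH.
apply: connect_trans (connect1 exy) _; apply: IH => //; exact: mem_head.
Qed.

Definition cutcond H a b := forall X, a \in X -> b \notin X ->
  exists x y x' y', [/\ x \in X, y \notin X, (x,y) \in H, x' \in X &
                     [/\ y' \notin X, (y',x') \in H & (x,y) != (x',y')]].

Lemma tsc_cut H a b : tsc H a b -> cutcond H a b.
Proof.
move=> [p [q [pp lp pq lq tw]]] X aX bX.
have bX1 : last a p \notin X by rewrite lp.
have [x [y [hxy xX yX]]] := crossing pp aX bX1.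
have bX2 : b \in ~: X by rewrite inE.
have aX2 : last b q \notin ~: X by rewrite lq inE negbK.
have [y' [x' [hyx yX' xX']]] := crossing pq bX2 aX2.
rewrite inE negbK in xX'; rewrite inE in yX'.
exists x, y, x', y'; split => //.
- exact: (pedges_in pp hxy).
- split => //; first exact: (pedges_in pq hyx).
  apply/negP => /eqP[ex ey]; subst; by move: (tw _ _ hxy); rewrite hyx.
Qed.

Lemma cut_trans H a b c : cutcond H a b -> cutcond H b c -> cutcond H a c.
Proof.
move=> h1 h2 X aX cX; case: (boolP (b \in X)) => bX; first exact: h2.
exact: h1.
Qed.

Lemma tsc_sym H a b : tsc H a b -> tsc H b a.
Proof.
move=> [p [q [pp lp pq lq tw]]]; exists q, p; split => // x y h.
by apply/negP => h'; move: (tw _ _ h'); rewrite h.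
Qed.

Lemma tsc_refl H a : tsc H a a.
Proof. by exists [::], [::]; split. Qed.


Definition eD H S : rel V := fun u v => [&& (u,v) \in H, u \notin S & v \notin S].

Lemma eD_path H S x s : path (eD H S) x s -> forall y, y \in s -> y \notin S.
Proof.
elim: s x => [|y s IH] x //= /andP[/and3P[_ _ yS] ps] z; rewrite in_cons => /orP[/eqP->//|].
exact: (IH y ps z).
Qed.

Lemma eD_notin H S u v : connect (eD H S) u v -> u \notin S -> v \notin S.
Proof.
move=> /connectP[s ps ->] uS; have := mem_last u s; rewrite in_cons => /orP[/eqP->//|].
exact: eD_path ps _.
Qed.

Lemma exit_ex H S y s : path (erel H) y s -> last y s \in S -> y \notin S ->
  exists y2 z, [/\ connect (eD H S) y y2, (y2,z) \in H, y2 \notin S & z \in S].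
Proof.
elim: s y => [|x s IH] y /=; first by move=> _ ->.
move=> /andP[yx ps] lS yS; case: (boolP (x \in S)) => xS.
  by exists y, x; split.
have [y2 [z [c1 h2 h3 h4]]] := IH x ps lS xS.
exists y2, z; split => //; apply: connect_trans c1; apply: connect1.
by apply/and3P; split.
Qed.

Lemma entry_ex H S x s : path (erel H) x s -> last x s \notin S ->
  (x \in S \/ exists p q, [/\ p \in S, q \notin S, (p,q) \in H & connect (eD H S) q x]) ->
  exists p q, [/\ p \in S, q \notin S, (p,q) \in H & connect (eD H S) q (last x s)].
Proof.
elim: s x => [|y s IH] x /=.
  by move=> _ xS [xS'|//]; rewrite xS' in xS.
move=> /andP[xy ps] lS pre; apply: IH => //.
case: (boolP (y \in S)) => yS; first by left.
right; case: (boolP (x \in S)) => xS.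
  by exists x, y; split.
case: pre => [xS'|[p [q [h1 h2 h3 h4]]]]; first by rewrite xS' in xS.
exists p, q; split => //; apply: connect_trans h4 (connect1 _).
by apply/and3P; split.
Qed.

Definition good H a F S := [/\ F \subset H, a \in S,
  (forall u v, (u,v) \in F -> u \in S /\ v \in S),
  (forall u v, (u,v) \in F -> (v,u) \notin F) &
  (forall u v, u \in S -> v \in S -> connect (erel F) u v)].

Lemma ear H a F S x0 d d' z : good H a F S -> x0 \in S -> d \notin S -> (x0,d) \in H ->
  connect (eD H S) d d' -> (d',z) \in H -> z \in S -> ~~ ((d == d') && (x0 == z)) ->
  exists F' S', good H a F' S' /\ #|S| < #|S'|.
Proof.
move=> [FH aS FS Ftw Fc] x0S dS x0d /connectP[s0 ps0 ->] dz zS nd.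
case: (shortenP ps0) dz nd => s ps us _ dz nd.
set l := last d s in dz nd *.
have nS : forall y, y \in d :: s -> y \notin S.
  by move=> y; rewrite in_cons => /orP[/eqP->//|]; exact: (eD_path ps).
have lS : l \notin S by apply: nS; apply: mem_last.
have psH : forall u v, (u,v) \in pedges d s -> (u,v) \in H.
  by move=> u v h; have := pedges_in ps h => /and3P[].
exists (F :|: [set (x0,d); (l, z)] :|: [set e in pedges d s]), (S :|: [set y in d :: s]).
split; last first.
  apply: proper_card; apply/properP; split; first exact: subsetUl.
  by exists d => //; rewrite !in_setU ?in_set1 ?in_set mem_head orbT.
have inF' : forall u v, (u,v) \in F -> (u,v) \in F :|: [set (x0,d); (l, z)] :|: [set e in pedges d s].
  by move=> u v h; rewrite !in_setU ?in_set1 ?in_set h.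
have inP' : forall u v, (u,v) \in pedges d s -> (u,v) \in F :|: [set (x0,d); (l, z)] :|: [set e in pedges d s].
  by move=> u v h; rewrite !in_setU ?in_set1 ?in_set h !orbT.
have e1 : (x0,d) \in F :|: [set (x0,d); (l, z)] :|: [set e in pedges d s] by rewrite !in_setU ?in_set1 ?in_set eqxx !orbT.
have e2 : (l,z) \in F :|: [set (x0,d); (l, z)] :|: [set e in pedges d s] by rewrite !in_setU ?in_set1 ?in_set eqxx !orbT.
have pF : path (erel (F :|: [set (x0,d); (l, z)] :|: [set e in pedges d s])) d s.
  by apply: path_pedges.
have key : forall u, u \in S :|: [set y in d :: s] ->
   connect (erel (F :|: [set (x0,d); (l, z)] :|: [set e in pedges d s])) x0 u /\
   connect (erel (F :|: [set (x0,d); (l, z)] :|: [set e in pedges d s])) u x0.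
  have sub : forall u v, connect (erel F) u v ->
      connect (erel (F :|: [set (x0,d); (l, z)] :|: [set e in pedges d s])) u v.
    by apply: connect_sub => u v h; apply: connect1; apply: inF'.
  move=> u; rewrite !in_setU ?in_set1 ?in_set => /orP[uS|ud].
    by split; apply: sub; apply: Fc.
  split.
    apply: connect_trans (connect1 e1) _; exact: path_connect pF _ ud.
  apply: connect_trans (connect_last pF ud) _.
  apply: connect_trans (connect1 e2) _; apply: sub; exact: Fc.
split.
- apply/subsetP => [[u v]]; rewrite !in_setU ?in_set1 ?in_set => /orP[/orP[h|/orP[/eqP[-> ->]|/eqP[-> ->]]]|h] //.
  + exact: (subsetP FH).
  + exact: psH.
- by rewrite inE aS.
- move=> u v; rewrite !in_setU ?in_set1 ?in_set => /orP[/orP[h|/orP[/eqP[-> ->]|/eqP[-> ->]]]|h].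
  + by have [-> ->] := FS _ _ h.
  + by rewrite x0S mem_head orbT.
  + by rewrite zS mem_last orbT.
  + by have [-> ->] := pedges_mem h; rewrite !orbT.
- move=> u v; rewrite !in_setU ?in_set1 ?in_set !xpair_eqE.
  have notinS : forall y, y \in S -> y \in d :: s -> False.
    by move=> y h1 h2; move: (nS y h2); rewrite h1.
  case/orP=> [/orP[h|/orP[/andP[/eqP-> /eqP->]|/andP[/eqP-> /eqP->]]]|h].
  + have [uS vS] := FS _ _ h.
    rewrite (negbTE (Ftw _ _ h)) /=.
    apply/negP => /orP[/orP[/andP[_ /eqP ud]|/andP[/eqP vl _]]|h'].
    * by apply: (notinS u uS); rewrite ud mem_head.
    * by apply: (notinS v vS); rewrite vl mem_last.
    * by have [h1 _] := pedges_mem h'; exact: (notinS v vS h1).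
  + apply/negP => /orP[/orP[h|/orP[/andP[/eqP e /eqP _]|/andP[/eqP e3 /eqP e4]]]|h'].
    * by have [h1 _] := FS _ _ h; move: dS; rewrite h1.
    * by move: dS; rewrite e x0S.
    * by move: nd; rewrite e3 e4 !eqxx.
    * by have [_ h1] := pedges_mem h'; exact: (notinS x0 x0S h1).
  + apply/negP => /orP[/orP[h|/orP[/andP[/eqP e3 /eqP e4]|/andP[/eqP e /eqP _]]]|h'].
    * by have [_ h1] := FS _ _ h; move: lS; rewrite h1.
    * by move: nd; rewrite e3 e4 !eqxx.
    * by move: lS; rewrite -e zS.
    * by have [h1 _] := pedges_mem h'; exact: (notinS z zS h1).
  + have [uin vin] := pedges_mem h.
    apply/negP => /orP[/orP[h2|/orP[/andP[/eqP e _]|/andP[_ /eqP e]]]|h'].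
    * by have [h1 _] := FS _ _ h2; exact: (notinS v h1 vin).
    * by apply: (notinS v) => //; rewrite e.
    * by apply: (notinS u) => //; rewrite e.
    * exact: uniq_twin us h h'.
- move=> u v hu hv; have [_ h1] := key u hu; have [h2 _] := key v hv.
  exact: connect_trans h1 h2.
Qed.


Definition sconn H := forall u v, connect (erel H) u v.

Lemma grow H a b F S : sconn H -> cutcond H a b -> good H a F S -> b \notin S ->
  exists F' S', good H a F' S' /\ #|S| < #|S'|.
Proof.
move=> hs hc hg bS; have aS : a \in S by case: hg.
have [s0 ps0 lb] := connectP (hs a b).
have [p [q [pS qS pq qb]]] : exists p q, [/\ p \in S, q \notin S, (p,q) \in H & connect (eD H S) q b].
  by rewrite lb; apply: entry_ex ps0 _ _; [rewrite -lb | left].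
pose Y := [set y | connect (eD H S) q y].
have YS : forall y, y \in Y -> y \notin S by move=> y; rewrite inE => h; apply: eD_notin h qS.
have aY : a \in ~: Y by rewrite inE; apply/negP => /YS; rewrite aS.
have bY : b \notin ~: Y by rewrite inE negbK inE.
have [x [y [x' [y' [xY yY xy x'Y [y'Y y'x' ne]]]]]] := hc _ aY bY.
rewrite inE in xY; rewrite inE negbK in yY; rewrite inE in x'Y; rewrite inE negbK in y'Y.
have x'S : x' \in S.
  apply/negPn/negP => x'S; move/negP: x'Y; apply; rewrite inE.
  apply: connect_trans (connect1 _); first by rewrite inE in y'Y; exact: y'Y.
  by apply/and3P; split => //; apply: YS.
case: (boolP ((q == y') && (p == x'))) => [/andP[/eqP eq /eqP ep]|nd].
  subst q p.
  have yS : y \notin S by apply: YS.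
  have [s1 ps1 la] := connectP (hs y a).
  have la' : last y s1 \in S by rewrite -la.
  have [y2 [z [c1 yz y2S zS]]] := exit_ex ps1 la' yS.
  case: (boolP (x \in S)) => xS.
    case: (boolP ((y' == y2) && (x' == z))) => [/andP[/eqP e1 /eqP e2]|nd2].
      subst y2 z; apply: (ear hg xS yS xy c1 yz zS).
      apply/negP => /andP[/eqP e3 /eqP e4]; subst; by rewrite eqxx in ne.
    apply: (ear hg x'S _ _ _ yz zS nd2) => //.
    by apply: connect_trans c1; rewrite inE in yY.
  have [s2 ps2 lx] := connectP (hs a x).
  have [s [dd [sS ddS sdd cdd]]] : exists p q, [/\ p \in S, q \notin S, (p,q) \in H & connect (eD H S) q x].
    by rewrite lx; apply: entry_ex ps2 _ _; [rewrite -lx | left].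
  apply: (ear hg sS ddS sdd _ yz zS).
    apply: connect_trans cdd _; apply: connect_trans c1; apply: connect1.
    by apply/and3P; split.
  apply/negP => /andP[/eqP e1 _]; subst dd.
  move/negP: xY; apply; rewrite inE; apply: connect_trans cdd.
  by apply: connect_trans c1; rewrite inE in yY.
apply: (ear hg pS qS pq _ y'x' x'S nd).
by rewrite inE in y'Y.
Qed.

Lemma good_tsc H a b F S : good H a F S -> b \in S -> tsc H a b.
Proof.
move=> [FH aS FS Ftw Fc] bS.
have [p pp lp] := connectP (Fc _ _ aS bS).
have [q pq lq] := connectP (Fc _ _ bS aS).
have sub : subrel (erel F) (erel H) by move=> u v h; exact: (subsetP FH).
exists p, q; split.
- exact: sub_path pp.
- by rewrite lp.
- exact: sub_path pq.
- by rewrite lq.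
- move=> u v h; apply/negP => h'.
  by move/negP: (Ftw _ _ (pedges_in pp h)); apply; exact: (pedges_in pq h').
Qed.

Lemma cut_tsc H a b : sconn H -> cutcond H a b -> tsc H a b.
Proof.
move=> hs hc.
suff: forall n F S, good H a F S -> #|~: S| <= n -> tsc H a b.
  move=> /(_ #|~: [set a]| set0 [set a]); apply => //.
  rewrite /good; split; [exact: sub0set | exact: set11 | by move=> u v; rewrite in_set0 | by move=> u v; rewrite in_set0 | ].
  by move=> u v; rewrite !inE => /eqP-> /eqP->; exact: connect0.
elim=> [|n IH] F S hg hn; (case: (boolP (b \in S)) => bS; first exact: good_tsc hg bS);
  have [F' [S' [hg' hlt]]] := grow hs hc hg bS;
  have e1 := cardsC S; have e2 := cardsC S'.
  by exfalso; move: hn hlt e1 e2; clear; lia.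
apply: IH hg' _; move: hn hlt e1 e2; clear; lia.
Qed.

Lemma tsc_trans H a b c : sconn H -> tsc H a b -> tsc H b c -> tsc H a c.
Proof.
move=> hs h1 h2; apply: cut_tsc => //; apply: cut_trans (tsc_cut h1) (tsc_cut h2).
Qed.

Lemma tscc_eq H a b : sconn H -> (tscc H a == tscc H b) = `[< tsc H a b >].
Proof.
move=> hs; apply/eqP/asboolP => [e|h].
  have : b \in tscc H b by rewrite inE; apply/asboolP; exact: tsc_refl.
  by rewrite -e inE => /asboolP.
apply/setP => x; rewrite !inE; apply/asboolP/asboolP => hx.
  exact: tsc_trans hs (tsc_sym h) hx.
exact: tsc_trans hs h hx.
Qed.

End S.

Theorem mainTheorem2 (V : finType) (E E1 : {set V * V}) (v w : V) (k : nat) :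
  twinless_strongly_connected E ->
  E1 \subset E ->
  strongly_connected E1 ->
  ~ twinless_strongly_connected E1 ->
  (v, w) \in E -> (v, w) \notin E1 ->
  tscc E1 v != tscc E1 w ->
  n_tscc E1 = k ->
  n_tscc ((v, w) |: E1) < k.
Proof.
move=> _ _ hs1 _ _ vwn hne <-.
set E2 := (v,w) |: E1.
have sub12 : subrel (erel E1) (erel E2) by move=> x y h; rewrite /erel /E2 in_setU; apply/orP; right; exact: h.
have hs2 : sconn E2.
  move=> x y; apply: (connect_sub (e := erel E1)); last exact: hs1.
  by move=> x' y' h; apply: connect1; apply: sub12.
have mono : forall a b, tsc E1 a b -> tsc E2 a b.
  move=> a b [p [q [pp lp pq lq tw]]]; exists p, q; split => //.
  - exact: sub_path sub12 _ _ pp.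
  - exact: sub_path sub12 _ _ pq.
have wvn : (w,v) \notin E1.
  apply/negP => wv; move/negP: hne; apply; rewrite tscc_eq //; apply/asboolP.
  have [P pP lP] := connectP (hs1 v w).
  exists P, [:: v]; split => //=; first by rewrite andbT.
  move=> x y hxy; rewrite inE xpair_eqE; apply/negP => /andP[/eqP e1 /eqP e2]; subst.
  by move/negP: vwn; apply; exact: (pedges_in pP hxy).
have tvw : tsc E2 v w.
  have [Q pQ lQ] := connectP (hs1 w v).
  exists [:: w], Q; split => //=.
  - by rewrite andbT /erel /E2 setU11.
  - exact: sub_path sub12 _ _ pQ.
  - move=> x y; rewrite inE xpair_eqE => /andP[/eqP e1 /eqP e2]; subst.
    by apply/negP => h; move/negP: wvn; apply; exact: (pedges_in pQ h).
pose f (C : {set V}) := if [pick x in C] is Some x then tscc E2 x else set0.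
have hf : forall a, f (tscc E1 a) = tscc E2 a.
  move=> a; rewrite /f; case: pickP => [x hx|h].
    apply/eqP; rewrite eq_sym tscc_eq //; apply/asboolP; apply: mono.
    by move: hx; rewrite inE => /asboolP.
  by move: (h a); rewrite inE; move/negP; case; apply/asboolP; exact: tsc_refl.
rewrite /n_tscc.
have -> : [set tscc E2 a | a : V] = f @: [set tscc E1 a | a : V].
  by rewrite -imset_comp; apply: eq_imset => a /=; rewrite hf.
rewrite ltn_neqAle leq_imset_card andbT; apply/negP => /imset_injP inj.
move/negP: hne; apply; apply/eqP; apply: inj; try by apply: imset_f.
rewrite !hf; apply/eqP; rewrite tscc_eq //; exact/asboolP.
Qed.
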